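(* (1) For any $r\ge0$ and odd primes $p_1,\ldots,p_r$ (not necessarily distinct), \[ \sum_{n=0}^{\infty}b_4\!\left(\prod_{s=1}^{r}p_s^2\,n+\frac{\prod_{s=1}^{r}p_s^2-1}{8}\right)q^n \equiv \psi(q) \pmod 2, \] where $\prod_{s=1}^{0}p_s^2=1$. (2) For any $r\ge1$, odd primes $p_1,\ldots,p_r$ and $n\ge0$, \[ b_4\!\left(\prod_{s=1}^{r}p_s^2\, n+\frac{(8i+p_{r})\prod_{s=1}^{r-1}p_s^2\,p_{r}-1}{8}\right)\equiv 0 \pmod 2 \] for each $i=1,2,\ldots,p_r-1$. (3) For any $r\ge1$, odd primes $p_1,\ldots,p_r$ and $n\ge0$, \[ b_4\!\left(\prod_{s=1}^{r-1}p_s^2\,p_{r}\, n+\frac{(8j+1)\prod_{s=1}^{r-1}p_s^2-1}{8}\right)\equiv 0 \pmod 2 \] for every integer $j$ with $0\le j\le p_r-1$ and $\left(\frac{8j+1}{p_r}\right)=-1$.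
   Context: For a positive integer $\ell$, $b_\ell(n)$ denotes the number of partitions of $n$ having no part divisible by $\ell$. $\psi(q)=\sum_{n\ge0}q^{n(n+1)/2}$. A congruence between power series modulo $2$ means coefficientwise congruence. $\left(\frac{a}{p}\right)$ is the Legendre symbol. *)

(* Defs.v *)
From mathcomp Require Import all_boot all_order all_algebra.
Set Implicit Arguments. Unset Strict Implicit. Unset Printing Implicit Defensive.

(* A partition of n is encoded by its multiplicity function m : part i |-> m i
   (i = 1..n; every multiplicity is <= n), with sum_i i * m i = n.
   b ell n = number of partitions of n with no part divisible by ell,
   i.e. multiplicity functions vanishing at 0 and at multiples of ell. *)
Definition b (ell n : nat) : nat :=
  #|[set m : {ffun 'I_n.+1 -> 'I_n.+1} |
      (\sum_(i < n.+1) (i : nat) * (m i : nat) == n) &&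
      [forall i : 'I_n.+1, ((i : nat) == 0) || (ell %| i) ==> ((m i : nat) == 0)]]|.

(* n-th coefficient of psi(q) = sum_{k>=0} q^{k(k+1)/2}: the number of k >= 0
   with k(k+1)/2 = n (necessarily k <= n). *)
Definition psi_coef (n : nat) : nat :=
  #|[set k : 'I_n.+1 | ((k : nat) * (k : nat).+1)./2 == n]|.

Definition legendre (a p : nat) : int :=
  if p %| a then Posz 0
  else if [exists x : 'I_p, (x : nat) ^ 2 == a %[mod p]] then Posz 1 else Negz 0.

Definition odd_prime (p : nat) : bool := prime p && odd p.

(* Main.v *)
Require Import Defs.
From mathcomp Require Import all_boot all_order all_algebra zify ring lra.
Set Implicit Arguments. Unset Strict Implicit. Unset Printing Implicit Defensive.
Import GRing.Theory.
Local Open Scope ring_scope.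

Definition F2 := 'F_2.
Notation P := {poly 'F_2}.

Lemma char2 : (2 \in [char P])%R.
Proof.
rewrite /= inE /=. apply/eqP. by rewrite -polyC_natr pchar_Fp_0.
Qed.

Lemma oneK (x : P) : x + x = 0.
Proof. exact: (addrr_pchar2 char2). Qed.

Definition cg (L : nat) (p q : P) := ('X^L %| p - q)%R.

Lemma cg_refl L p : cg L p p.
Proof. by rewrite /cg subrr dvdp0. Qed.

Lemma cg_sym L p q : cg L p q -> cg L q p.
Proof. by rewrite /cg -opprB dvdpNr. Qed.

Lemma cg_trans L p q r : cg L p q -> cg L q r -> cg L p r.
Proof.
rewrite /cg => h1 h2. have -> : p - r = (p - q) + (q - r) by rewrite addrA subrK.
exact: dvdp_add.
Qed.

Lemma cg_add L p q p' q' : cg L p p' -> cg L q q' -> cg L (p + q) (p' + q').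
Proof.
rewrite /cg => h1 h2. have -> : p + q - (p' + q') = (p - p') + (q - q') by rewrite opprD addrACA.
exact: dvdp_add.
Qed.

Lemma cg_mul L p q p' q' : cg L p p' -> cg L q q' -> cg L (p * q) (p' * q').
Proof.
rewrite /cg => h1 h2.
have -> : p * q - p' * q' = (p - p') * q + p' * (q - q').
  by rewrite mulrBl mulrBr addrA subrK.
by apply: dvdp_add; [apply: dvdp_mulr | apply: dvdp_mull].
Qed.

Lemma cg_coef L p q i : cg L p q -> (i < L)%N -> p`_i = q`_i.
Proof.
rewrite /cg => h hi. apply/eqP; rewrite -subr_eq0 -coefB.
by rewrite -(divpK h) coefMXn hi.
Qed.

Lemma cg_cancel L c p q : c.[0] != 0 -> cg L (c * p) (c * q) -> cg L p q.
Proof.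
rewrite /cg -mulrBr => hc h.
have cop : coprimep ('X^L) c.
  rewrite coprimep_sym; apply: coprimep_expr.
  by rewrite -[X in coprimep _ X]subr0 coprimep_XsubC rootE hc.
by rewrite -(Gauss_dvdpr _ cop).
Qed.

Lemma cg_high L k : (L <= k)%N -> cg L ('X^k) 0.
Proof. by move=> h; rewrite /cg subr0 dvdp_exp2l. Qed.

Lemma cg_one L k : (L <= k)%N -> cg L (1 + 'X^k) 1.
Proof.
move=> h; rewrite -[X in cg _ _ X]addr0; apply: cg_add; [exact: cg_refl|exact: cg_high].
Qed.

Lemma cg_prod L (I : Type) (r : seq I) (Pr : pred I) (F G : I -> P) :
  (forall i, Pr i -> cg L (F i) (G i)) ->
  cg L (\prod_(i <- r | Pr i) F i) (\prod_(i <- r | Pr i) G i).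
Proof. move=> h; apply: (big_ind2 (cg L)) => //; [exact: cg_refl | move=> ? ? ? ?; exact: cg_mul]. Qed.

Lemma cg_sum L (I : Type) (r : seq I) (Pr : pred I) (F G : I -> P) :
  (forall i, Pr i -> cg L (F i) (G i)) ->
  cg L (\sum_(i <- r | Pr i) F i) (\sum_(i <- r | Pr i) G i).
Proof. move=> h; apply: (big_ind2 (cg L)) => //; [exact: cg_refl | move=> ? ? ? ?; exact: cg_add]. Qed.

Lemma prod_pair (h : nat -> P) K :
  \prod_(i < 2 * K) h i = \prod_(j < K) (h (2 * j)%N * h (2 * j).+1).
Proof.
elim: K => [|K IH]; first by rewrite !big_ord0.
rewrite (_ : (2 * K.+1 = (2 * K).+2)%N); last by rewrite mulnS.
by rewrite !big_ord_recr /= IH mulrA.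
Qed.

Definition Oc c N : P := \prod_(j < N) (1 + 'X^(c * (2 * j).+1)).
Definition Gc c N : P := \prod_(j < N) (1 + 'X^(c * j.+1)).

Lemma sq1X k : (1 + 'X^k : P) ^+ 2 = 1 + 'X^(2 * k).
Proof.
by rewrite sqrrD expr1n mul1r mulr2n oneK addr0 -exprM mulnC.
Qed.

Lemma Oc_sq c N : Oc c N ^+ 2 = Oc (2 * c) N.
Proof. rewrite /Oc -prodrXl. apply: eq_bigr => j _. by rewrite sq1X mulnA. Qed.

Lemma Gc_sq c N : Gc c N ^+ 2 = Gc (2 * c) N.
Proof. rewrite /Gc -prodrXl. apply: eq_bigr => j _. by rewrite sq1X mulnA. Qed.

Lemma Gc_split c M : Gc c (2 * M) = Oc c M * Gc (2 * c) M.
Proof.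
rewrite /Gc (prod_pair (fun j => 1 + 'X^(c * j.+1))) /Oc -big_split /=; apply: eq_bigr => j _.
by congr (_ * (1 + 'X^_)); nia.
Qed.

Lemma Gc_trunc L c N N' : (L <= c * N.+1)%N -> (N <= N')%N -> cg L (Gc c N') (Gc c N).
Proof.
move=> hL /subnK <-; elim: (N' - N)%N => [|d IH]; first by rewrite add0n; exact: cg_refl.
rewrite addSn /Gc big_ord_recr /= -[X in cg _ _ X]mulr1.
apply: cg_mul; first exact: IH.
apply: cg_one; apply: (leq_trans hL); rewrite leq_mul2l; apply/orP; right; lia.
Qed.

Lemma Oc_trunc L c N N' : (L <= c * (2 * N).+1)%N -> (N <= N')%N -> cg L (Oc c N') (Oc c N).
Proof.
move=> hL /subnK <-; elim: (N' - N)%N => [|d IH]; first by rewrite add0n; exact: cg_refl.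
rewrite addSn /Oc big_ord_recr /= -[X in cg _ _ X]mulr1.
apply: cg_mul; first exact: IH.
apply: cg_one; apply: (leq_trans hL); rewrite leq_mul2l; apply/orP; right; lia.
Qed.

Lemma hor1X k : (0 < k)%N -> (1 + 'X^k : P).[0] = 1.
Proof. by move=> hk; rewrite hornerD hornerXn hornerC expr0n eqn0Ngt hk addr0. Qed.

Lemma Gc_unit c N : (0 < c)%N -> (Gc c N).[0] != 0.
Proof.
move=> hc; rewrite /Gc horner_prod big1 ?oner_neq0 // => j _; apply: hor1X; lia.
Qed.

Lemma Oc_unit c N : (0 < c)%N -> (Oc c N).[0] != 0.
Proof.
move=> hc; rewrite /Oc horner_prod big1 ?oner_neq0 // => j _; apply: hor1X; lia.
Qed.

Lemma euler L c N : (0 < c)%N -> (L <= c * N.+1)%N -> cg L (Oc c N * Gc c N) 1.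
Proof.
move=> hc hL.
have h1 : cg L (Gc c (2 * N)) (Gc c N) by apply: Gc_trunc => //; lia.
rewrite Gc_split -Gc_sq in h1.
apply: cg_sym; apply: (@cg_cancel L (Gc c N)); first exact: Gc_unit.
rewrite mulr1; apply: cg_sym; apply: cg_trans h1 => //.
rewrite expr2 mulrA (mulrC (Gc c N) (Oc c N)) -mulrA; exact: cg_refl.
Qed.

Fixpoint qbin (y : P) (n k : nat) : P :=
  match n, k with
  | 0, 0 => 1
  | 0, _.+1 => 0
  | n'.+1, 0 => 1
  | n'.+1, k'.+1 => qbin y n' k' + y ^+ k'.+1 * qbin y n' k'.+1
  end.

Lemma qbinSS y n k : qbin y n.+1 k.+1 = qbin y n k + y ^+ k.+1 * qbin y n k.+1.
Proof. by []. Qed.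

Lemma qbin0 y n : qbin y n 0 = 1.
Proof. by case: n. Qed.

Lemma qbin_gt y n k : (n < k)%N -> qbin y n k = 0.
Proof.
elim: n k => [|n IH] [|k] //= hk.
by rewrite !IH ?mulr0 ?addr0 //; lia.
Qed.

Arguments qbin : simpl never.

Lemma qbinom y a b n :
  \prod_(i < n) (b + a * y ^+ i) =
  \sum_(k < n.+1) qbin y n k * y ^+ 'C(k, 2) * a ^+ k * b ^+ (n - k).
Proof.
elim: n a => [|n IH] a.
  by rewrite big_ord0 big_ord1 /= qbin0 !expr0 !mulr1.
rewrite big_ord_recl /= expr0 mulr1.
under eq_bigr => i _ do rewrite /bump /= add1n exprS mulrA.
rewrite IH mulrDl !big_distrr /=.
rewrite [in RHS]big_ord_recl /= qbin0 expr0 mulr1 expr0 mulr1 subn0.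
under [in RHS]eq_bigr => i _ do rewrite /bump /= add1n qbinSS mulrDl mulrDl mulrDl.
rewrite big_split /= [X in _ = _ + X]addrC addrA; congr (_ + _); last first.
  apply: eq_bigr => i _.
  rewrite binS bin1 exprD exprMn exprS subSS.
  by ring.
rewrite big_ord_recl /= qbin0 expr0 mulr1 expr0 mulr1 subn0 mul1r mul1r -exprS.
congr (_ + _).
rewrite big_ord_recr /= qbin_gt // !mulr0 !mul0r addr0.
apply: eq_bigr => i _; rewrite /bump /= add1n subSS binS bin1 exprD exprMn exprS -(subnSK (ltn_ord i)) [b ^+ (_.+1)]exprS.
by ring.
Qed.

Definition Dq (y : P) n := \prod_(i < n) (1 + y ^+ i.+1).

Lemma DqS y n : Dq y n.+1 = Dq y n * (1 + y ^+ n.+1).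
Proof. by rewrite /Dq big_ord_recr. Qed.

Lemma qbinD y n k : (k <= n)%N -> qbin y n k * Dq y k * Dq y (n - k) = Dq y n.
Proof.
elim: n k => [|n IH] [|k] //.
- by move=> _; rewrite qbin0 /Dq !big_ord0 !mulr1.
- by move=> _; rewrite qbin0 subn0 /Dq big_ord0 !mul1r.
rewrite ltnS subSS => hk; rewrite qbinSS DqS DqS.
have IH1 := IH k hk.
case: (ltngtP k n) hk => // [hkn|ekn] _; last first.
  subst k; rewrite (qbin_gt y (ltnSn n)) mulr0 addr0.
  rewrite (_ : qbin y n n * (Dq y n * (1 + y ^+ n.+1)) * Dq y (n - n) =
    qbin y n n * Dq y n * Dq y (n - n) * (1 + y ^+ n.+1)); last by ring.
  by rewrite IH1.
have IH2 := IH k.+1 hkn.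
have em : (n - k = (n - k.+1).+1)%N by lia.
rewrite em DqS in IH1; rewrite em DqS.
rewrite DqS in IH2.
set A := qbin y n k in IH1 *; set B := qbin y n k.+1 in IH2 *.
set Dk := Dq y k in IH1 IH2 *; set Dm := Dq y (n - k.+1) in IH1 IH2 *.
have e : y ^+ k.+1 * y ^+ (n - k.+1).+1 = y ^+ n.+1 by rewrite -exprD; congr (_ ^+ _); lia.
rewrite (_ : (A + y ^+ k.+1 * B) * (Dk * (1 + y ^+ k.+1)) * (Dm * (1 + y ^+ (n - k.+1).+1)) =
   (1 + y ^+ k.+1) * (A * Dk * (Dm * (1 + y ^+ (n - k.+1).+1))) +
   y ^+ k.+1 * (1 + y ^+ (n - k.+1).+1) * (B * (Dk * (1 + y ^+ k.+1)) * Dm)); last by ring.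
rewrite IH1 IH2.
rewrite (_ : (1 + y ^+ k.+1) * Dq y n + y ^+ k.+1 * (1 + y ^+ (n - k.+1).+1) * Dq y n =
  Dq y n + Dq y n * (y ^+ k.+1 * y ^+ (n - k.+1).+1) + (y ^+ k.+1 * Dq y n + y ^+ k.+1 * Dq y n)); last by ring.
by rewrite oneK addr0 e mulrDr mulr1.
Qed.

Definition X4 : P := 'X^4.

Lemma Dq_X4 n : Dq X4 n = Gc 4 n.
Proof. by apply: eq_bigr => i _; rewrite /X4 -exprM. Qed.

Lemma qbin_lim L N k M N' : (L <= 4 * M.+1)%N -> (M <= k)%N -> (M <= N - k)%N -> (k <= N)%N ->
  (M <= N')%N -> cg L (qbin X4 N k * Gc 4 N') 1.
Proof.
move=> hL h1 h2 h3 h4.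
have e := qbinD X4 h3; rewrite !Dq_X4 in e.
have gk : cg L (Gc 4 k) (Gc 4 M) by apply: Gc_trunc.
have gm : cg L (Gc 4 (N - k)) (Gc 4 M) by apply: Gc_trunc.
have gN : cg L (Gc 4 N) (Gc 4 M) by apply: Gc_trunc; lia.
have gN' : cg L (Gc 4 N') (Gc 4 M) by apply: Gc_trunc.
have c1 : cg L (Gc 4 M * (qbin X4 N k * Gc 4 M)) (Gc 4 M * 1).
  rewrite mulr1; apply: (cg_trans _ gN); rewrite -e.
  rewrite (_ : Gc 4 M * (qbin X4 N k * Gc 4 M) = qbin X4 N k * Gc 4 M * Gc 4 M); last by ring.
  apply: cg_mul; [apply: cg_mul; [exact: cg_refl | exact: cg_sym] | exact: cg_sym].
have c2 : cg L (qbin X4 N k * Gc 4 M) 1 by apply: (cg_cancel _ c1); exact: Gc_unit.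
apply: (cg_trans _ c2); apply: cg_mul; [exact: cg_refl | exact: gN'].
Qed.

Definition tri t := (t * t.+1)./2.
Definition idx N k := if (k < N)%N then (2 * (N - k))%N else (2 * (k - N) - 1)%N.

Lemma tri2 t : (2 * tri t = t * t.+1)%N.
Proof.
rewrite /tri mul2n halfK oddM /= andbN subn0 //.
Qed.

Lemma bin22 x : (2 * 'C(x, 2) = x * x.-1)%N.
Proof.
rewrite bin2 mul2n halfK oddM.
case: x => //= x; by rewrite andNb subn0.
Qed.

Lemma expo N k : (k <= 2 * N)%N ->
  (4 * 'C(N, 2) + N * (4 * N - 1) + tri (idx N k) = 4 * 'C(k, 2) + (4 * N - 1) * (2 * N - k))%N.
Proof.
move=> hk.
suff H : (4 * (N * N.-1) + 2 * (N * (4 * N - 1)) + idx N k * (idx N k).+1 =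
   4 * (k * k.-1) + 2 * ((4 * N - 1) * (2 * N - k)))%N.
  have := bin22 N; have := bin22 k; have := tri2 (idx N k).
  set a := 'C(N, 2); set b := 'C(k, 2); set c := tri _; set u := (N * N.-1)%N; set v := (k * k.-1)%N.
  set w := (N * (4 * N - 1))%N; set z := ((4 * N - 1) * (2 * N - k))%N; set t := (idx N k * _)%N.
  lia.
rewrite /idx.
case: (ltnP k N) => hkN.
- have [d eN] : exists d, N = (k + d.+1)%N by exists (N - k)%N.-1; lia.
  subst N.
  have -> : (2 * (k + d.+1 - k) = 2 * d.+1)%N by lia.
  have -> : (4 * (k + d.+1) - 1 = 4 * k + 4 * d + 3)%N by lia.
  have -> : (2 * (k + d.+1) - k = k + 2 * d + 2)%N by lia.
  rewrite addnS /=.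
  case: k {hk hkN} => [|k] /=; ring.
- have [m ek] : exists m, k = (N + m)%N by exists (k - N)%N; lia.
  subst k.
  have -> : (N + m - N = m)%N by lia.
  have -> : (2 * N - (N + m) = N - m)%N by lia.
  have hm : (m <= N)%N by lia.
  have [e eN] : exists e, N = (m + e)%N by exists (N - m)%N; lia.
  subst N.
  have -> : (m + e - m = e)%N by lia.
  case: m {hk hkN hm} => [|m]; case: e => [|e].
  + by [].
  + rewrite !add0n addn0 /= (_ : (4 * e.+1 - 1 = 4 * e + 3)%N); last lia.
    rewrite (_ : (2 * 0 - 1 = 0)%N) //. ring.
  + rewrite (_ : (m.+1 + 0 = m.+1)%N); last lia.
    rewrite (_ : (4 * m.+1 - 1 = 4 * m + 3)%N); last lia.
    rewrite (_ : (2 * m.+1 - 1 = 2 * m + 1)%N); last lia.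
    rewrite (_ : ((m.+1 + m.+1).-1 = 2 * m + 1)%N); last lia.
    rewrite /=. ring.
  + rewrite (_ : (4 * (m.+1 + e.+1) - 1 = 4 * m + 4 * e + 7)%N); last lia.
    rewrite (_ : (2 * m.+1 - 1 = 2 * m + 1)%N); last lia.
    rewrite (_ : ((m.+1 + e.+1 + m.+1).-1 = 2 * m + e + 2)%N); last lia.
    rewrite (_ : ((m.+1 + e.+1).-1 = m + e + 1)%N); last lia. ring.
Qed.

Lemma Xn_neq0 k : ('X^k : P) != 0.
Proof. by rewrite -size_poly_eq0 size_polyXn. Qed.

Lemma sumE N : (\sum_(j < N) (4 * (N - j.+1)) + \sum_(j < N) (4 * N - 1) =
   4 * 'C(N, 2) + N * (4 * N - 1))%N.
Proof.
rewrite sum_nat_const card_ord; congr (_ + _)%N.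
elim: N => [|N IH]; first by rewrite big_ord0.
rewrite big_ord_recl /= subSS subn0 binS bin1.
under eq_bigr => i _ do rewrite /bump /= add1n subSS.
rewrite IH; lia.
Qed.

Lemma Oc1_split N : Oc 1 (2 * N) =
  \prod_(j < N) (1 + 'X^(4 * j + 1)) * \prod_(j < N) (1 + 'X^(4 * j + 3)).
Proof.
rewrite /Oc (prod_pair (fun j => 1 + 'X^(1 * (2 * j).+1))) -big_split /=.
apply: eq_bigr => j _; congr ((1 + 'X^_) * (1 + 'X^_)); lia.
Qed.

Lemma lhs_prod N : \prod_(i < 2 * N) ('X^(4 * N - 1) + 1 * X4 ^+ i) =
  'X^(4 * 'C(N, 2) + N * (4 * N - 1)) * Oc 1 (2 * N).
Proof.
rewrite [in LHS](_ : (2 * N = N + N)%N); last lia.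
rewrite big_split_ord /= (reindex_inj rev_ord_inj) /=.
rewrite (eq_bigr (fun i : 'I_N => 'X^(4 * (N - i.+1)) * (1 + 'X^(4 * i + 3)))); last first.
  move=> i _; rewrite mul1r /X4 -exprM mulrDr mulr1 -exprD addrC; congr (_ + 'X^_); have := ltn_ord i; lia.
rewrite [X in _ * X = _](eq_bigr (fun i : 'I_N => 'X^(4 * N - 1) * (1 + 'X^(4 * i + 1)))); last first.
  move=> i _; rewrite mul1r /X4 -exprM mulrDr mulr1 -exprD; congr (_ + 'X^_); have := ltn_ord i; lia.
rewrite big_split /=. rewrite [X in _ * X = _]big_split /= !prodrXr.
rewrite Oc1_split -sumE exprD.
ring.
Qed.

Lemma jtp N : Oc 1 (2 * N) = \sum_(k < (2 * N).+1) qbin X4 (2 * N) k * 'X^(tri (idx N k)).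
Proof.
apply: (mulfI (Xn_neq0 (4 * 'C(N, 2) + N * (4 * N - 1)))).
rewrite -lhs_prod qbinom big_distrr /=; apply: eq_bigr => k _.
rewrite expr1n mulr1 /X4 -!exprM mulrCA -exprD expo; last by rewrite -ltnS.
by rewrite exprD mulrA.
Qed.

Lemma tri_ge t : (t <= tri t)%N.
Proof. have := tri2 t; case: t => [|t] // h; nia. Qed.

Lemma idx_bound n N k : N = (2 * n).+1 -> (idx N k <= n)%N -> (k <= 2 * N)%N ->
  (n <= k)%N /\ (n <= 2 * N - k)%N.
Proof. move=> -> ; rewrite /idx; case: ltnP => h1 h2 h3; lia. Qed.

Lemma psi_cg n : cg n.+1 (Oc 1 (2 * (2 * n).+1) * Gc 4 (2 * n).+1)
   (\sum_(k < (2 * (2 * n).+1).+1) 'X^(tri (idx (2 * n).+1 k))).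
Proof.
rewrite jtp big_distrl; apply: cg_sum => k _ /=.
set t := tri _.
rewrite mulrAC.
case: (leqP n.+1 t) => ht.
  apply: (@cg_trans _ _ 0); last exact: cg_sym (cg_high ht).
  rewrite -(mulr0 (qbin X4 (2 * (2 * n).+1) k * Gc 4 (2 * n).+1)).
  apply: cg_mul; [exact: cg_refl | exact: cg_high].
rewrite -[X in cg _ _ X]mul1r; apply: cg_mul; last exact: cg_refl.
have hk : (k <= 2 * (2 * n).+1)%N by rewrite -ltnS.
have hi : (idx (2 * n).+1 k <= n)%N by have := tri_ge (idx (2 * n).+1 k); rewrite -/t; lia.
have [h1 h2] := idx_bound erefl hi hk.
apply: (@qbin_lim _ _ _ n) => //; lia.
Qed.

Definition cnd (n : nat) (i j : 'I_n.+1) : bool :=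
  (((i : nat) == 0) || (4 %| i) ==> ((j : nat) == 0))%N.

Definition Bpoly n : P :=
  \prod_(i < n.+1) \sum_(j < n.+1) (if cnd i j then 'X^(i * j) else 0).

Lemma prod_ifX (I : finType) (c : I -> bool) (g : I -> nat) :
  \prod_(i : I) (if c i then 'X^(g i) else 0 : P) =
  if [forall i, c i] then 'X^(\sum_(i : I) g i) else 0.
Proof.
case: (boolP [forall i, c i]) => [/forallP h | /forallPn [i hi]].
  by rewrite -prodrXr; apply: eq_bigr => i _; rewrite h.
by rewrite (bigD1 i) //= (negbTE hi) mul0r.
Qed.

Lemma B_coef n : (Bpoly n)`_n = ((b 4 n)%:R : 'F_2).
Proof.
rewrite /Bpoly bigA_distr_bigA /= coef_sum.
under eq_bigr => f _ do rewrite (prod_ifX (fun i => cnd i (f i)) (fun i => (i : nat) * f i)%N).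
rewrite (eq_bigr (fun f : {ffun 'I_n.+1 -> 'I_n.+1} =>
   if [forall i, cnd i (f i)] && ((\sum_(i < n.+1) (i : nat) * f i)%N == n) then 1 else 0)); last first.
  by move=> f _; case: ifP => _; rewrite ?coef0 // coefXn eq_sym; case: eqP.
rewrite -big_mkcond sumr_const /b; congr (_ *+ _).
by apply: eq_card => f; rewrite !inE andbC.
Qed.

Definition hh (i : nat) : P := if ((i != 0) && ~~ (4 %| i))%N then 1 + 'X^i else 1.
Definition Hpoly n : P := \prod_(i < n.+1) hh i.

Lemma B_inv n : cg n.+1 (Bpoly n * Hpoly n) 1.
Proof.
rewrite /Bpoly /Hpoly -big_split /=.
apply: (@cg_trans _ _ (\prod_(i < n.+1) 1)); last by rewrite big1_eq; exact: cg_refl.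
apply: cg_prod => i _; rewrite /hh /cnd.
case: ((i : nat) =P 0%N) => [hi0|/eqP hi0] /=.
  rewrite (bigD1 ord0) //= big1 ?addr0 ?mul1r ?mulr1 ?hi0 ?andFb; first exact: cg_refl.
  by move=> j /negbTE hj; rewrite -[j == ord0]/((j : nat) == 0%N) in hj; rewrite hj.
case: (boolP (4 %| i)%N) => h4 /=.
  rewrite (bigD1 ord0) //= big1 ?addr0 ?mulr1 ?muln0 ?expr0; first exact: cg_refl.
  by move=> j /negbTE hj; rewrite -[j == ord0]/((j : nat) == 0%N) in hj; rewrite hj.
rewrite (eq_bigr (fun j : 'I_n.+1 => ('X^i) ^+ j)); last by move=> j _; rewrite exprM.
rewrite mulrC addrC -(GRing.subr_pchar2 char2) -subrX1 -exprM (GRing.subr_pchar2 char2) addrC.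
apply: cg_one; rewrite leq_pmull //; lia.
Qed.

Lemma hh_cg L i : (L <= i)%N -> cg L (hh i) 1.
Proof. move=> h; rewrite /hh; case: ifP => _; [exact: cg_one | exact: cg_refl]. Qed.

Lemma H4 K : \prod_(i < 4 * K) hh i = Oc 1 (2 * K) * Oc 2 K.
Proof.
rewrite (_ : (4 * K = 2 * (2 * K))%N); last lia.
rewrite (prod_pair hh) (prod_pair (fun j => hh (2 * j) * hh (2 * j).+1)) /=.
rewrite Oc1_split /Oc -!big_split /=; apply: eq_bigr => j _.
have -> : hh (2 * (2 * j)) = 1 by rewrite /hh; case: ifP => //; lia.
have -> : hh (2 * (2 * j)).+1 = 1 + 'X^(4 * j + 1).
  by rewrite /hh; case: ifP => h; [congr (1 + 'X^_); lia | move: h; lia].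
have -> : hh (2 * (2 * j).+1) = 1 + 'X^(2 * (2 * j).+1).
  by rewrite /hh; case: ifP => h; [congr (1 + 'X^_); lia | move: h; lia].
have -> : hh (2 * (2 * j).+1).+1 = 1 + 'X^(4 * j + 3).
  by rewrite /hh; case: ifP => h; [congr (1 + 'X^_); lia | move: h; lia].
ring.
Qed.

Lemma H_cg n K : (n < 4 * K)%N -> cg n.+1 (Hpoly n) (Oc 1 (2 * K) * Oc 2 K).
Proof.
move=> hK; rewrite -H4.
rewrite (_ : (4 * K = n.+1 + (4 * K - n.+1))%N); last lia.
rewrite big_split_ord /= -[X in cg _ X _]mulr1; apply: cg_mul; first exact: cg_refl.
apply: cg_sym; apply: (@cg_trans _ _ (\prod_(j < 4 * K - n.+1) 1)); last first.
  by rewrite big1_eq; exact: cg_refl.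
by apply: cg_prod => j _; apply: hh_cg; lia.
Qed.

Lemma H_unit n : (Hpoly n).[0] != 0.
Proof.
rewrite /Hpoly horner_prod big1 ?oner_neq0 // => i _; rewrite /hh.
case: ifP => h; last by rewrite hornerC.
by apply: hor1X; lia.
Qed.

Lemma key_cg n : cg n.+1 (Bpoly n) (\sum_(k < (2 * (2 * n).+1).+1) 'X^(tri (idx (2 * n).+1 k))).
Proof.
set N := (2 * n).+1.
apply: (@cg_cancel _ (Hpoly n)); first exact: H_unit.
apply: (@cg_trans _ _ 1); first by rewrite mulrC; exact: B_inv.
have hH : cg n.+1 (Hpoly n) (Oc 1 (2 * N) * Oc 2 N) by apply: H_cg; lia.
apply: cg_sym; apply: (@cg_trans _ _ ((Oc 1 (2 * N) * Oc 2 N) * (Oc 1 (2 * N) * Gc 4 N))).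
  by apply: cg_mul => //; apply: cg_sym; exact: psi_cg.
apply: (@cg_trans _ _ (Oc 4 N * Gc 4 N)); last by apply: euler => //; lia.
rewrite (_ : Oc 1 (2 * N) * Oc 2 N * (Oc 1 (2 * N) * Gc 4 N) = (Oc 1 (2 * N)) ^+ 2 * Oc 2 N * Gc 4 N);
  last by ring.
rewrite Oc_sq.
apply: (@cg_trans _ _ (Oc 2 N * Oc 2 N * Gc 4 N)); last first.
  by rewrite -expr2 Oc_sq; exact: cg_refl.
apply: cg_mul => //; last exact: cg_refl.
apply: cg_mul => //; last exact: cg_refl.
by apply: Oc_trunc => //; lia.
Qed.

Lemma card01 (T1 T2 : finType) (A : {set T1}) (B : {set T2}) :
  (#|A| <= 1)%N -> (#|B| <= 1)%N -> (A != set0 <-> B != set0) -> #|A| = #|B|.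
Proof.
move=> hA hB [h1 h2].
have := card_gt0 A; have := card_gt0 B.
case: (boolP (A == set0)) => hA0; case: (boolP (B == set0)) => hB0 /= eB eA.
- by rewrite (eqP hA0) (eqP hB0) !cards0.
- by move: (h2 hB0); rewrite hA0.
- by move: (h1 hA0); rewrite hB0.
- move/idP: eB; move/idP: eA; lia.
Qed.

Lemma tri_inj a c : tri a = tri c -> a = c.
Proof.
move=> e; have := tri2 a; have := tri2 c; rewrite e => h1 h2.
case: (ltngtP a c) => // h.
- have := ltn_mul h (h : a.+1 < c.+1)%N; lia.
- have := ltn_mul h (h : c.+1 < a.+1)%N; lia.
Qed.

Lemma psi_count n : #|[set k : 'I_(2 * (2 * n).+1).+1 | tri (idx (2 * n).+1 k) == n]| = psi_coef n.
Proof.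
rewrite /psi_coef; apply: card01.
- apply/card_le1_eqP => x y; rewrite !inE => /eqP hx /eqP hy.
  have e := tri_inj (etrans hy (esym hx)).
  have := ltn_ord x; have := ltn_ord y; move: e; rewrite /idx => e hy' hx'.
  apply: val_inj => /=; move: e.
  case: (ltnP x (2 * n).+1) => h1; case: (ltnP y (2 * n).+1) => h2 /= e; lia.
- apply/card_le1_eqP => x y; rewrite !inE => /eqP hx /eqP hy.
  apply: val_inj => /=; apply: tri_inj; by rewrite /tri hx hy.
split.
- case/set0Pn => k; rewrite inE => /eqP hk.
  apply/set0Pn.
  have ht : (idx (2 * n).+1 k < n.+1)%N by have := tri_ge (idx (2 * n).+1 k); lia.
  by exists (Ordinal ht); rewrite inE /=; apply/eqP.
- case/set0Pn => t; rewrite inE => /eqP ht.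
  apply/set0Pn.
  have tn : (t <= n)%N by have := tri_ge t; rewrite /tri; lia.
  have hd := odd_double_half t.
  set k := (if odd t then (2 * n).+1 + t./2 + 1 else (2 * n).+1 - t./2)%N.
  have hk : (k < (2 * (2 * n).+1).+1)%N by rewrite /k; case: (odd t) hd; lia.
  have hi : idx (2 * n).+1 k = t.
    rewrite /idx /k; case: (odd t) hd => /= hd.
    + have -> : ((2 * n).+1 + t./2 + 1 < (2 * n).+1)%N = false by lia.
      lia.
    + case: (ltnP ((2 * n).+1 - t./2) (2 * n).+1) => h; lia.
  by exists (Ordinal hk); rewrite inE /= hi /tri ht.
Qed.

Lemma b4_F2 n : ((b 4 n)%:R : 'F_2) = (psi_coef n)%:R.
Proof.
rewrite -B_coef (cg_coef (key_cg n)) // coef_sum -psi_count.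
rewrite (eq_bigr (fun k : 'I_(2 * (2 * n).+1).+1 => if tri (idx (2 * n).+1 k) == n then 1 else 0)); last first.
  by move=> k _; rewrite coefXn eq_sym; case: eqP.
by rewrite -big_mkcond sumr_const cardsE.
Qed.

Lemma F2_nat a c : ((a%:R : 'F_2) = c%:R) -> a = c %[mod 2].
Proof.
move=> h.
have h' : (((a %% 2)%N)%:R : 'F_2) = ((c %% 2)%N)%:R by rewrite !(Fp_nat_mod (isT : prime 2)).
have ha : (a %% 2 < 2)%N by rewrite ltn_pmod.
have hc : (c %% 2 < 2)%N by rewrite ltn_pmod.
move: h' ha hc; move: (a %% 2)%N (c %% 2)%N => x y.
case: x => [|[|x]] //; case: y => [|[|y]] // => /eqP;
  by rewrite ?oner_eq0 // eq_sym oner_eq0.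
Qed.

Lemma b4_mod2 n : b 4 n = psi_coef n %[mod 2].
Proof. exact: F2_nat (b4_F2 n). Qed.

Local Close Scope ring_scope.

Definition issq x := exists y, y ^ 2 = x.

Lemma tri_sq m : (exists t, tri t = m) <-> issq (8 * m + 1).
Proof.
split.
- case=> t ht; exists (2 * t + 1); have := tri2 t; rewrite ht => h.
  rewrite (_ : (2 * t + 1) ^ 2 = 4 * (t * t.+1) + 1); last by rewrite !expnS expn0; ring.
  lia.
- case=> y hy.
  have hd := odd_double_half y.
  have oy : odd y by have := congr1 odd hy; rewrite oddX oddD oddM /=.
  exists (y./2); rewrite oy in hd; apply/eqP; rewrite -(eqn_pmul2l (isT : 0 < 2)) tri2; apply/eqP.
  have : (1 + y./2.*2) ^ 2 = 8 * m + 1 by rewrite hd.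
  rewrite -mul2n (_ : (1 + 2 * y./2) ^ 2 = 4 * (y./2 * (y./2).+1) + 1); last by rewrite !expnS expn0; ring.
  lia.
Qed.

Lemma psi_le1 m : psi_coef m <= 1.
Proof.
apply/card_le1_eqP => x y; rewrite !inE => /eqP hx /eqP hy.
apply: val_inj => /=; apply: tri_inj; by rewrite /tri hx hy.
Qed.

Lemma psi_ne m : [set t : 'I_m.+1 | (t * t.+1)./2 == m] != set0 <-> issq (8 * m + 1).
Proof.
rewrite -tri_sq; split.
- by case/set0Pn => t; rewrite inE => /eqP ht; exists t.
- case=> t ht; apply/set0Pn.
  have tn : t < m.+1 by have := tri_ge t; lia.
  by exists (Ordinal tn); rewrite inE /=; apply/eqP.
Qed.

Lemma psi0 m : ~ issq (8 * m + 1) -> psi_coef m = 0.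
Proof.
move=> h; apply/eqP; rewrite /psi_coef cards_eq0; apply/negPn/negP => /psi_ne; exact: h.
Qed.

Lemma psi_eq m m' : (issq (8 * m + 1) <-> issq (8 * m' + 1)) -> psi_coef m = psi_coef m'.
Proof.
move=> h; apply: card01; try exact: psi_le1.
by rewrite !psi_ne.
Qed.

Lemma sq_cancel s x : 0 < s -> issq (s ^ 2 * x) -> issq x.
Proof.
move=> hs [y hy].
have : s ^ 2 %| y ^ 2 by rewrite hy dvdn_mulr.
rewrite dvdn_pexp2r // => /dvdnP [z ez]; exists z.
apply/eqP; rewrite -(eqn_pmul2l (_ : 0 < s ^ 2)); last by rewrite expn_gt0 hs; apply/eqP.
by rewrite -hy ez expnMn mulnC.
Qed.

Lemma sq_mul s x : issq x -> issq (s ^ 2 * x).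
Proof. by case=> y <-; exists (s * y); rewrite expnMn. Qed.

Lemma sq_prime p x : prime p -> issq (p * x) -> p %| x.
Proof.
move=> pp [y hy].
have : p %| y ^ 2 by rewrite hy dvdn_mulr.
rewrite Euclid_dvdX // andbT => /dvdnP [z ez].
have e : p * (z ^ 2 * p) = p * x by rewrite -hy ez expnMn !expnS expn0; ring.
move/eqP: e; rewrite eqn_pmul2l ?prime_gt0 // => /eqP <-; exact: dvdn_mull.
Qed.

Lemma odd_sq8 y : odd y -> y ^ 2 %% 8 = 1.
Proof.
move=> oy; have hd := odd_double_half y; rewrite oy -mul2n in hd.
set u := y./2 in hd.
have [v [hv|hv]] : exists v, u = 2 * v \/ u = 2 * v + 1 by exists (u %/ 2); lia.
- rewrite -hd hv (_ : (1 + 2 * (2 * v)) ^ 2 = 8 * (2 * v * v + v) + 1); last by rewrite !expnS expn0; ring.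
  by rewrite mulnC modnMDl.
- rewrite -hd hv (_ : (1 + 2 * (2 * v + 1)) ^ 2 = 8 * (2 * v * v + 3 * v + 1) + 1); last by rewrite !expnS expn0; ring.
  by rewrite mulnC modnMDl.
Qed.

Lemma div8 X : X %% 8 = 1 -> 8 * ((X - 1) %/ 8) + 1 = X.
Proof. lia. Qed.

Lemma div8E A X : X %% 8 = 1 -> 8 * (A + (X - 1) %/ 8) + 1 = 8 * A + X.
Proof. move=> h; have := div8 h; lia. Qed.

Lemma prod_sq (ps : seq nat) : \prod_(p <- ps) p ^ 2 = (\prod_(p <- ps) p) ^ 2.
Proof. elim: ps => [|p ps IH]; first by rewrite !big_nil. by rewrite !big_cons IH expnMn. Qed.

Lemma prod_odd (ps : seq nat) : all odd_prime ps -> odd (\prod_(p <- ps) p).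
Proof.
elim: ps => [|p ps IH]; first by rewrite big_nil.
by rewrite big_cons /= => /andP [/andP [_ op] h]; rewrite oddM op IH.
Qed.

Lemma odd_prime_not8 p : odd_prime p -> coprime p 8.
Proof.
case/andP => pp op; rewrite prime_coprime // (_ : 8 = 2 ^ 3) // Euclid_dvdX // andbT.
apply/negP => /dvdn_leq h; have h2 := h isT; have h1 := prime_gt1 pp.
have e : p = 2 by lia.
by rewrite e in op.
Qed.

Theorem theorem3p12 :
  (forall (ps : seq nat), all odd_prime ps ->
     forall n : nat,
       let P := \prod_(p <- ps) p ^ 2 in
       b 4 (P * n + (P - 1) %/ 8) = psi_coef n %[mod 2])
  /\
  (forall (ps : seq nat) (p : nat), all odd_prime ps -> odd_prime p ->
     forall n i : nat, 1 <= i <= p - 1 ->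
       let Q := \prod_(q <- ps) q ^ 2 in
       2 %| b 4 (Q * p ^ 2 * n + ((8 * i + p) * Q * p - 1) %/ 8))
  /\
  (forall (ps : seq nat) (p : nat), all odd_prime ps -> odd_prime p ->
     forall n j : nat, j <= p - 1 -> legendre (8 * j + 1) p = Negz 0 ->
       let Q := \prod_(q <- ps) q ^ 2 in
       2 %| b 4 (Q * p * n + ((8 * j + 1) * Q - 1) %/ 8)).
Proof.
split; [|split].
- move=> ps hps n; cbv zeta.
  rewrite prod_sq; set s := \prod_(p <- ps) p.
  have os : odd s by exact: prod_odd.
  have s0 : 0 < s by case: (s) os.
  have h8 := odd_sq8 os.
  rewrite b4_mod2; congr (_ %% 2); apply: psi_eq.
  have -> : 8 * (s ^ 2 * n + (s ^ 2 - 1) %/ 8) + 1 = s ^ 2 * (8 * n + 1).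
    rewrite div8E //; ring.
  split; [exact: sq_cancel | exact: sq_mul].
- move=> ps p hps hp n i hi; cbv zeta.
  rewrite prod_sq; set s := \prod_(q <- ps) q.
  have os : odd s by exact: prod_odd.
  have s0 : 0 < s by case: (s) os.
  have op : odd p by case/andP: hp.
  have pp : prime p by case/andP: hp.
  have hX : ((8 * i + p) * s ^ 2 * p) %% 8 = 1.
    rewrite (_ : (8 * i + p) * s ^ 2 * p = (i * s ^ 2 * p) * 8 + (s * p) ^ 2); last first.
      by rewrite !expnS expn0; ring.
    by rewrite modnMDl odd_sq8 // oddM os op.
  rewrite /dvdn b4_mod2 psi0 //.
  have -> : 8 * (s ^ 2 * p ^ 2 * n + ((8 * i + p) * s ^ 2 * p - 1) %/ 8) + 1
     = s ^ 2 * (p * (p * (8 * n + 1) + 8 * i)).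
    rewrite div8E //; rewrite !expnS expn0; ring.
  move/(sq_cancel s0)/(sq_prime pp).
  rewrite (dvdn_addr _ (dvdn_mulr _ (dvdnn p))) Gauss_dvdr ?odd_prime_not8 // => /dvdn_leq.
  lia.
- move=> ps p hps hp n j hj hleg; cbv zeta.
  rewrite prod_sq; set s := \prod_(q <- ps) q.
  have os : odd s by exact: prod_odd.
  have s0 : 0 < s by case: (s) os.
  have pp : prime p by case/andP: hp.
  have hX : ((8 * j + 1) * s ^ 2) %% 8 = 1.
    rewrite (_ : (8 * j + 1) * s ^ 2 = (j * s ^ 2) * 8 + s ^ 2); last by ring.
    by rewrite modnMDl odd_sq8.
  rewrite /dvdn b4_mod2 psi0 //.
  have -> : 8 * (s ^ 2 * p * n + ((8 * j + 1) * s ^ 2 - 1) %/ 8) + 1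
     = s ^ 2 * ((8 * n) * p + (8 * j + 1)).
    rewrite div8E //; ring.
  move/(sq_cancel s0) => [y hy].
  move: hleg; rewrite /legendre; case: ifP => // _.
  suff -> : [exists x : 'I_p, (x : nat) ^ 2 == 8 * j + 1 %[mod p]] by [].
  apply/existsP; exists (Ordinal (ltn_pmod y (prime_gt0 pp))) => /=.
  by rewrite modnXm hy modnMDl.
Qed.
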